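(* In the M/G/1 setting below: (i) For a fixed fee $p\in[0,R-C/\mu)$: (a) if $\lambda\le\mathbb{E}[\Lambda]$, then $\mathrm{Rev}^S(p)\le\mathrm{Rev}^C(p)$; (b) if $\mathbb{E}[\Lambda]<\lambda\le\bar\lambda$ and $\xi(p)\ge\lambda$, then $\mathrm{Rev}^S(p)\le\mathrm{Rev}^C(p)$; (c) if $\lambda>\bar\lambda$ and $\xi(p)\ge\bar\lambda$, then $\mathrm{Rev}^S(p)\ge\mathrm{Rev}^C(p)$. (ii) As functions of the joining probability $q$: if $\lambda>\mathbb{E}[\Lambda]$, there exists $q_0>0$ such that $\mathrm{Rev}^S(q)>\mathrm{Rev}^C(q)$ for all $q\in(0,q_0)$; if $\lambda<\mathbb{E}[\Lambda]$, there exists $q_0>0$ such that $\mathrm{Rev}^S(q)<\mathrm{Rev}^C(q)$ for all $q\in(0,q_0)$.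
   Context: Setting: an M/G/1 queue with true (deterministic) Poisson arrival rate $\lambda>0$ and i.i.d. service times $S$ with $\mathbb{E}[S]=1/\mu$, $\mathbb{E}[S^2]=s^2$; for $0\le x<\mu$, $W(x)=\frac{s^2x}{2(1-x/\mu)}+\frac1\mu$ is the expected time in system at effective arrival rate $x$. Each served customer receives reward $R$, pays fee $p$, and incurs waiting cost $C>0$ per unit time, with $R\ge C/\mu$. Customers' beliefs about the arrival rate are described by a non-degenerate nonnegative random variable $\Lambda$ whose support has minimum $\lambda_{\min}$ and maximum $\lambda_{\max}$, with $0\le\lambda_{\min}<\lambda<\lambda_{\max}<\mu$. For $0\le p<R-C/\mu$, $\xi(p)\in(0,\mu)$ is the unique solution of $W(\xi)=(R-p)/C$, i.e. $\xi(p)=\left(\frac{Cs^2}{2(R-p-C/\mu)}+\frac1\mu\right)^{-1}$. Classical case: $q^C(p)=\min\{\xi(p)/\lambda,1\}$ and $\mathrm{Rev}^C(p)=p\lambda q^C(p)$. Shared belief case: $q^S(p)=1$ if $C\,\mathbb{E}[W(\Lambda)]\le R-p$, otherwise $q^S(p)$ is the unique $q\in[0,1)$ with $C\,\mathbb{E}[W(q\Lambda)]=R-p$; $\mathrm{Rev}^S(p)=p\lambda q^S(p)$. The threshold $\bar\lambda\in[0,\mu)$ is defined by $W(\bar\lambda)=\mathbb{E}[W(\Lambda)]$ (so $q^S(p)=1$ iff $\xi(p)\ge\bar\lambda$). As functions of $q\in[0,1]$: $\mathrm{Rev}^C(q)=q\lambda(R-C\,W(q\lambda))$ and $\mathrm{Rev}^S(q)=q\lambda\,\mathbb{E}[R-C\,W(q\Lambda)]$.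 *)

(* Defs.v *)
(* R : realType, the belief Lambda is given through
   its law P, a probability measure on the Borel sets of R. *)
From HB Require Import structures.
From mathcomp Require Import all_boot all_order all_algebra.
From mathcomp Require Import all_classical all_reals all_analysis.
Set Implicit Arguments. Unset Strict Implicit. Unset Printing Implicit Defensive.
Import Order.TTheory GRing.Theory Num.Theory.
Local Open Scope classical_set_scope.
Local Open Scope ring_scope.

Section MG1.
Variable R : realType.

(* expected time in system at effective arrival rate x (for 0 <= x < mu) *)
Definition W (s2 mu x : R) : R := s2 * x / (2 * (1 - x / mu)) + 1 / mu.

(* xi(p): solution of W(xi) = (R - p)/C *)
Definition xi (Rw C s2 mu p : R) : R :=
  (C * s2 / (2 * (Rw - p - C / mu)) + 1 / mu)^-1.

Definition support_min_max (P : probability R R) (a b : R) : Prop :=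
  P `[a, b]%classic = 1%E /\
  (forall e : R, 0 < e -> (0 < P `](a - e)%R, (a + e)%R[%classic)%E) /\
  (forall e : R, 0 < e -> (0 < P `](b - e)%R, (b + e)%R[%classic)%E).

Definition ELam (P : probability R R) : R := Rintegral P setT (fun x => x).

Definition EW (P : probability R R) (s2 mu q : R) : R :=
  Rintegral P setT (fun x => W s2 mu (q * x)).

Definition qC (Rw C s2 mu lam p : R) : R := Num.min (xi Rw C s2 mu p / lam) 1.
Definition RevC (Rw C s2 mu lam p : R) : R := p * lam * qC Rw C s2 mu lam p.

Definition qS (P : probability R R) (Rw C s2 mu p : R) : R :=
  if C * EW P s2 mu 1 <= Rw - p then 1
  else xget 0 [set q : R | 0 <= q < 1 /\ C * EW P s2 mu q = Rw - p].
Definition RevS (P : probability R R) (Rw C s2 mu lam p : R) : R :=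
  p * lam * qS P Rw C s2 mu p.

Definition lambda_bar (P : probability R R) (s2 mu : R) : R :=
  xget 0 [set x : R | 0 <= x < mu /\ W s2 mu x = EW P s2 mu 1].

Definition RevC_q (Rw C s2 mu lam q : R) : R :=
  q * lam * (Rw - C * W s2 mu (q * lam)).
Definition RevS_q (P : probability R R) (Rw C s2 mu lam q : R) : R :=
  q * lam * Rintegral P setT (fun x => Rw - C * W s2 mu (q * x)).

End MG1.

(* Main.v *)
Require Import Defs.
From HB Require Import structures.
From mathcomp Require Import all_boot all_order all_algebra.
From mathcomp Require Import all_classical all_reals all_analysis.
From mathcomp Require Import measurable_realfun.
From mathcomp Require Import ring lra.
Import Order.TTheory GRing.Theory Num.Theory.
Local Open Scope classical_set_scope.
Local Open Scope ring_scope.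

Lemma minv (R : realType) : measurable_fun setT (@GRing.inv R).
Proof.
rewrite -(setUv [set 0%R]); apply/measurable_funU => //.
  by apply: measurableC.
split; first exact: measurable_fun_set1.
apply: open_continuous_measurable_fun.
  by rewrite openC; apply: compact_closed; [exact: Rhausdorff | exact: compact_set1].
move=> x /set_mem xne; apply: inv_continuous; exact/eqP.
Qed.

Lemma supp_int (R : realType) (P : probability R R) (a b : R) (f : R -> R) :
  P `[a, b]%classic = 1%E -> measurable_fun setT f ->
  Rintegral P setT f = Rintegral P `[a, b]%classic f.
Proof.
move=> P1 mf; rewrite /Rintegral -(setUv `[a, b]%classic) integral_setU //.
- rewrite [X in (_ + X)%E]null_set_integral ?adde0 //.
  + by apply: measurableC; exact: measurable_itv.
  + apply/measurable_EFinP; exact: measurable_funS mf.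
  + have := @probability_setC _ _ _ P _ (measurable_itv `[a, b]); rewrite P1 subee //; exact.
- by apply: measurableC; exact: measurable_itv.
- rewrite setUv; exact/measurable_EFinP.
- by rewrite /disj_set setICr.
Qed.

Lemma intD (R : realType) (P : probability R R) (a b : R) (f : R -> R) lo hi :
  measurable_fun setT f -> (forall x, `[a, b]%classic x -> lo <= f x <= hi) ->
  P.-integrable `[a, b]%classic (EFin \o f).
Proof.
move=> mf hb; apply: measurable_bounded_integrable => //.
- by apply: (le_lt_trans (probability_le1 _ _)) => //; rewrite ltey.
- exact: measurable_funS mf.
- exists (`|lo| + `|hi|); split; first by rewrite num_real.
  move=> M hM x Dx; have /andP[h1 h2] := hb x Dx.
  rewrite /= ler_norml; have := ler_norm hi; have := ler_norm (- lo); rewrite normrN.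
  have := normr_ge0 lo; have := normr_ge0 hi.
  move=> *; apply/andP; split; lra.
Qed.

Lemma mid (R : realType) : measurable_fun setT (fun x : R => x).
Proof. exact: measurable_id. Qed.

Lemma lin_int (R : realType) (P : probability R R) (a b c0 c1 : R) :
  a <= b -> P `[a, b]%classic = 1%E ->
  Rintegral P `[a, b]%classic (fun x => c0 + c1 * x) = c0 + c1 * ELam P.
Proof.
move=> ab P1.
have iid : P.-integrable `[a, b]%classic (EFin \o (fun x : R => x)).
  apply: (@intD R P a b _ a b); first exact: mid.
  by move=> x /=; rewrite in_itv /=.
have ic : P.-integrable `[a, b]%classic (EFin \o (fun x : R => c0)).
  apply: (@intD R P a b _ c0 c0); first exact: measurable_cst.
  by move=> x /=; rewrite lexx.
rewrite RintegralD //; last first.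
  exact: (integrableZl (measurable_itv _) c1 iid).
rewrite (@Rintegral_cst _ _ _ P _ (measurable_itv `[a, b])).
have -> : fine (P `[a, b]%classic) = 1.
  by apply: (congr1 fine P1).
rewrite mulr1 RintegralZl //.
by rewrite /ELam (@supp_int R P a b _ P1 (mid R)).
Qed.

Lemma lin_integrable (R : realType) (P : probability R R) (a b c0 c1 : R) :
  P.-integrable `[a, b]%classic (EFin \o (fun x => c0 + c1 * x)).
Proof.
have iid : P.-integrable `[a, b]%classic (EFin \o (fun x : R => x)).
  apply: (@intD R P a b _ a b); first exact: mid.
  by move=> x /=; rewrite in_itv /=.
have ic : P.-integrable `[a, b]%classic (EFin \o (fun x : R => c0)).
  apply: (@intD R P a b _ c0 c0); first exact: measurable_cst.
  by move=> x /=; rewrite lexx.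
exact: (integrableD (measurable_itv _) ic (integrableZl (measurable_itv _) c1 iid)).
Qed.

Lemma lin_lower (R : realType) (P : probability R R) (a b c0 c1 lo hi : R)
  (f : R -> R) :
  a <= b -> P `[a, b]%classic = 1%E -> measurable_fun setT f ->
  (forall x, `[a, b]%classic x -> lo <= f x <= hi) ->
  (forall x, `[a, b]%classic x -> c0 + c1 * x <= f x) ->
  c0 + c1 * ELam P <= Rintegral P setT f.
Proof.
move=> ab P1 mf hb hl.
rewrite -(@lin_int R P a b c0 c1 ab P1) (@supp_int R P a b _ P1 mf).
apply: le_Rintegral => //; first exact: lin_integrable.
exact: (@intD R P a b _ lo hi).
Qed.

Lemma lin_upper (R : realType) (P : probability R R) (a b c0 c1 lo hi : R)
  (f : R -> R) :
  a <= b -> P `[a, b]%classic = 1%E -> measurable_fun setT f ->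
  (forall x, `[a, b]%classic x -> lo <= f x <= hi) ->
  (forall x, `[a, b]%classic x -> f x <= c0 + c1 * x) ->
  Rintegral P setT f <= c0 + c1 * ELam P.
Proof.
move=> ab P1 mf hb hl.
rewrite -(@lin_int R P a b c0 c1 ab P1) (@supp_int R P a b _ P1 mf).
apply: le_Rintegral => //; last exact: lin_integrable.
exact: (@intD R P a b _ lo hi).
Qed.

Lemma mW (R : realType) (s2 mu q : R) :
  measurable_fun setT (fun x : R => W s2 mu (q * x)).
Proof.
rewrite /W.
apply: (@measurable_funD _ _ _ _ (fun x => s2 * (q * x) / (2 * (1 - q * x / mu))) (fun=> 1 / mu)); last exact: measurable_cst.
apply: (@measurable_funM _ _ _ _ (fun x => s2 * (q * x)) (fun x => (2 * (1 - q * x / mu))^-1)).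
  apply: (@measurable_funM _ _ _ _ (fun=> s2) (fun x => q * x)); first exact: measurable_cst.
  apply: (@measurable_funM _ _ _ _ (fun=> q) (fun x => x)); first exact: measurable_cst.
  exact: mid.
apply: (measurableT_comp (@minv R)).
apply: (@measurable_funM _ _ _ _ (fun=> 2) (fun x => 1 - q * x / mu)); first exact: measurable_cst.
apply: (@measurable_funB _ _ _ _ (fun=> 1) (fun x => q * x / mu)); first exact: measurable_cst.
apply: (@measurable_funM _ _ _ _ (fun x => q * x) (fun=> mu^-1)); last exact: measurable_cst.
apply: (@measurable_funM _ _ _ _ (fun=> q) (fun x => x)); first exact: measurable_cst.
exact: mid.
Qed.

Lemma mRW (R : realType) (Rw C s2 mu q : R) :
  measurable_fun setT (fun x : R => Rw - C * W s2 mu (q * x)).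
Proof.
apply: (@measurable_funB _ _ _ _ (fun=> Rw) (fun x => C * W s2 mu (q * x))); first exact: measurable_cst.
apply: (@measurable_funM _ _ _ _ (fun=> C) (fun x => W s2 mu (q * x))); first exact: measurable_cst.
exact: mW.
Qed.
Lemma pne0 (R : realType) (x : R) : 0 < x -> x != 0.
Proof. by move=> h; rewrite gt_eqF. Qed.

Lemma Wform (R : realType) (s2 mu y : R) : 0 < mu -> y < mu ->
  W s2 mu y = 1 / mu + s2 * mu / 2 * (y / (mu - y)).
Proof.
move=> hmu hy; rewrite /W.
have h1 : mu != 0 by apply: pne0.
have h2 : mu - y != 0 by apply: pne0; lra.
have h3 : 1 - y / mu = (mu - y) / mu by field.
rewrite h3; field; rewrite h1 h2 //.
Qed.

Lemma W_lb (R : realType) (s2 mu y : R) : 0 < mu -> 0 <= s2 -> 0 <= y -> y < mu ->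
  1 / mu + s2 / 2 * y <= W s2 mu y.
Proof.
move=> hmu hs hy0 hy; rewrite Wform //.
have h2 : 0 < mu - y by lra.
have E : s2 * mu / 2 * (y / (mu - y)) - s2 / 2 * y = s2 / 2 * (y * y / (mu - y)).
  by field; apply: pne0.
have : 0 <= s2 / 2 * (y * y / (mu - y)).
  by apply: mulr_ge0; [apply: divr_ge0 => //; lra| apply: divr_ge0; [apply: mulr_ge0|lra]].
lra.
Qed.

Lemma W_ub (R : realType) (s2 mu y B Y2 : R) : 0 < mu -> 0 <= s2 -> 0 <= y -> y <= B -> B < mu ->
  y * y <= Y2 ->
  W s2 mu y <= 1 / mu + s2 / 2 * y + s2 / 2 * (Y2 / (mu - B)).
Proof.
move=> hmu hs hy0 hyB hB hY; rewrite Wform //; last lra.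
have h2 : 0 < mu - y by lra.
have h3 : 0 < mu - B by lra.
have E : s2 * mu / 2 * (y / (mu - y)) - s2 / 2 * y = s2 / 2 * (y * y / (mu - y)).
  by field; apply: pne0.
have : y * y / (mu - y) <= Y2 / (mu - B).
  apply: (@le_trans _ _ (Y2 / (mu - y))).
    by apply: ler_pM => //; [apply: mulr_ge0| rewrite invr_ge0; lra].
  apply: ler_pM => //; first by apply: (le_trans _ hY); apply: mulr_ge0.
    by rewrite invr_ge0; lra.
  by rewrite lef_pV2 ?posrE //; lra.
have : 0 <= s2 / 2 by apply: divr_ge0 => //; lra.
move=> h hh.
have := ler_wpM2l h hh.
lra.
Qed.

Lemma W_tan (R : realType) (s2 mu y a : R) : 0 < mu -> 0 <= s2 -> y < mu -> a < mu ->
  W s2 mu a + s2 * mu ^+ 2 / (2 * (mu - a) ^+ 2) * (y - a) <= W s2 mu y.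
Proof.
move=> hmu hs hy ha; rewrite !Wform //.
have h2 : 0 < mu - y by lra.
have h3 : 0 < mu - a by lra.
have E : 1 / mu + s2 * mu / 2 * (y / (mu - y)) -
   (1 / mu + s2 * mu / 2 * (a / (mu - a)) + s2 * mu ^+ 2 / (2 * (mu - a) ^+ 2) * (y - a))
   = s2 * mu ^+ 2 * (y - a) ^+ 2 / (2 * (mu - y) * (mu - a) ^+ 2).
  by field; rewrite !pne0.
have : 0 <= s2 * mu ^+ 2 * (y - a) ^+ 2 / (2 * (mu - y) * (mu - a) ^+ 2).
  apply: divr_ge0.
    apply: mulr_ge0; last exact: sqr_ge0.
    by apply: mulr_ge0 => //; exact: sqr_ge0.
  apply: mulr_ge0; last exact: sqr_ge0.
  by apply: mulr_ge0; lra.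
lra.
Qed.

Lemma W_lt (R : realType) (s2 mu a b : R) : 0 < mu -> 0 < s2 -> b < a -> a < mu ->
  W s2 mu b < W s2 mu a.
Proof.
move=> hmu hs hba ha; rewrite !Wform //; last lra.
have h2 : 0 < mu - a by lra.
have h3 : 0 < mu - b by lra.
have E : 1 / mu + s2 * mu / 2 * (a / (mu - a)) - (1 / mu + s2 * mu / 2 * (b / (mu - b)))
   = s2 * mu ^+ 2 * (a - b) / (2 * (mu - a) * (mu - b)).
  by field; rewrite !pne0.
have : 0 < s2 * mu ^+ 2 * (a - b) / (2 * (mu - a) * (mu - b)).
  apply: divr_gt0; first by rewrite !mulr_gt0 // ?exprn_gt0 //; lra.
  by rewrite !mulr_gt0 //; lra.
lra.
Qed.

Lemma xi_facts (R : realType) (Rw C s2 mu p : R) : 0 < mu -> 0 < s2 -> 0 < C ->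
  C / mu < Rw - p ->
  0 < xi Rw C s2 mu p /\ xi Rw C s2 mu p < mu /\ C * W s2 mu (xi Rw C s2 mu p) = Rw - p.
Proof.
move=> hmu hs hC hp; rewrite /xi.
set D0 := Rw - p - C / mu.
have hD : 0 < D0 by rewrite /D0; lra.
have hden : 0 < C * s2 * mu + 2 * D0 by have := mulr_gt0 (mulr_gt0 hC hs) hmu; lra.
have -> : (C * s2 / (2 * D0) + 1 / mu)^-1 = 2 * D0 * mu / (C * s2 * mu + 2 * D0).
  by field; rewrite !pne0.
have hx : 2 * D0 * mu / (C * s2 * mu + 2 * D0) < mu.
  rewrite ltr_pdivrMr //; have := mulr_gt0 (mulr_gt0 (mulr_gt0 hC hs) hmu) hmu; lra.
split; first by apply: divr_gt0 => //; rewrite !mulr_gt0 //; lra.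
split => //.
rewrite Wform //.
have h2 : mu - 2 * D0 * mu / (C * s2 * mu + 2 * D0) = C * s2 * mu * mu / (C * s2 * mu + 2 * D0).
  by field; rewrite pne0.
rewrite h2 (_ : Rw - p = D0 + C / mu); last by rewrite /D0; ring.
field.
by rewrite !pne0.
Qed.

Lemma W_inv (R : realType) (s2 mu d : R) : 0 < mu -> 0 < s2 -> 0 <= d ->
  0 <= 2 * d * mu / (s2 * mu + 2 * d) /\ 2 * d * mu / (s2 * mu + 2 * d) < mu /\
  W s2 mu (2 * d * mu / (s2 * mu + 2 * d)) = 1 / mu + d.
Proof.
move=> hmu hs hd.
have hden : 0 < s2 * mu + 2 * d by have := mulr_gt0 hs hmu; lra.
have hx : 2 * d * mu / (s2 * mu + 2 * d) < mu.
  rewrite ltr_pdivrMr //; have := mulr_gt0 (mulr_gt0 hs hmu) hmu; lra.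
split; first by apply: divr_ge0; [rewrite !mulr_ge0 //; lra| lra].
split => //.
rewrite Wform //.
have h2 : mu - 2 * d * mu / (s2 * mu + 2 * d) = s2 * mu * mu / (s2 * mu + 2 * d).
  by field; rewrite pne0.
rewrite h2; field.
by rewrite !pne0 //; rewrite ?mulr_gt0 //; lra.
Qed.

Lemma inD (R : realType) (a b x : R) : `[a, b]%classic x -> a <= x <= b.
Proof. by rewrite /= in_itv. Qed.

Lemma WD (R : realType) (s2 mu lmin lmax q x : R) : 0 < mu -> 0 <= s2 ->
  0 <= lmin -> lmax < mu -> 0 <= q -> q <= 1 -> lmin <= x -> x <= lmax ->
  [/\ 1 / mu + s2 / 2 * (q * x) <= W s2 mu (q * x),
      W s2 mu (q * x) <= 1 / mu + s2 / 2 * (q * x) + s2 / 2 * (q * q * (lmax * lmax) / (mu - lmax)),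
      W s2 mu (q * x) <= 1 / mu + s2 / 2 * lmax + s2 / 2 * (lmax * lmax / (mu - lmax)) &
      1 / mu <= W s2 mu (q * x)].
Proof.
move=> hmu hs h0 hl hq0 hq1 hx1 hx2.
have y0 : 0 <= q * x by apply: mulr_ge0 => //; lra.
have y1 : q * x <= lmax by nra.
have hs2 : 0 <= s2 / 2 by apply: divr_ge0 => //; lra.
have lb := @W_lb R s2 mu (q * x) hmu hs y0 (le_lt_trans y1 hl).
split => //.
- apply: (@W_ub R s2 mu (q * x) lmax) => //.
  have xx : x * x <= lmax * lmax by apply: ler_pM; lra.
  rewrite (_ : q * x * (q * x) = q * q * (x * x)); last by ring.
  by apply: ler_wpM2l => //; exact: mulr_ge0.
- apply: (le_trans (@W_ub R s2 mu (q * x) lmax (lmax * lmax) hmu hs y0 y1 hl _)); first by apply: ler_pM.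
  have := ler_wpM2l hs2 y1; lra.
- have := mulr_ge0 hs2 y0; lra.
Qed.

Lemma qS_cases (R : realType) (P : probability R R) (Rw C s2 mu p : R) :
  let q := qS P Rw C s2 mu p in
  (q = 1 /\ C * EW P s2 mu 1 <= Rw - p) \/
  (0 <= q < 1 /\ C * EW P s2 mu q = Rw - p) \/ q = 0.
Proof.
rewrite /qS; case: ifP => h; first by left.
right; set S := [set q : R | 0 <= q < 1 /\ C * EW P s2 mu q = Rw - p].
case: (pselect (exists q, S q)) => [/(xgetPex 0) hS | nS]; first by left.
right; apply: xgetPN => x hx; apply: nS; by exists x.
Qed.

Lemma qS_range (R : realType) (P : probability R R) (Rw C s2 mu p : R) :
  0 <= qS P Rw C s2 mu p <= 1.
Proof.
case: (qS_cases _ P Rw C s2 mu p) => [[-> _]|[[/andP[h0 h1] _]|->]].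
- by rewrite ler01 lexx.
- by rewrite h0 ltW.
- by rewrite lexx ler01.
Qed.

Lemma fin (R : realType) (p lam q xv : R) : 0 <= p -> 0 < lam -> 0 <= q -> q <= 1 ->
  q * lam <= xv -> p * lam * q <= p * lam * Num.min (xv / lam) 1.
Proof.
move=> hp hl hq0 hq1 hqx; apply: ler_wpM2l; first by apply: mulr_ge0 => //; lra.
rewrite le_min hq1 andbT ler_pdivlMr //.
Qed.

Theorem proposition5 (R : realType) (lam mu s2 Rw C lmin lmax : R)
  (P : probability R R)
  (hlam : 0 < lam) (hmu : 0 < mu) (hs2 : (1 / mu) ^+ 2 <= s2)
  (hC : 0 < C) (hR : C / mu <= Rw)
  (hlmin : 0 <= lmin) (hlmin_lam : lmin < lam) (hlam_lmax : lam < lmax)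
  (hlmax : lmax < mu)
  (hsupp : support_min_max P lmin lmax) :
  (forall p : R, 0 <= p -> p < Rw - C / mu ->
     (lam <= ELam P ->
        RevS P Rw C s2 mu lam p <= RevC Rw C s2 mu lam p) /\
     (ELam P < lam -> lam <= lambda_bar P s2 mu -> lam <= xi Rw C s2 mu p ->
        RevS P Rw C s2 mu lam p <= RevC Rw C s2 mu lam p) /\
     (lambda_bar P s2 mu < lam -> lambda_bar P s2 mu <= xi Rw C s2 mu p ->
        RevC Rw C s2 mu lam p <= RevS P Rw C s2 mu lam p)) /\
  (ELam P < lam -> exists2 q0 : R, 0 < q0 &
     forall q : R, 0 < q -> q < q0 -> q <= 1 ->
       RevC_q Rw C s2 mu lam q < RevS_q P Rw C s2 mu lam q) /\
  (lam < ELam P -> exists2 q0 : R, 0 < q0 &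
     forall q : R, 0 < q -> q < q0 -> q <= 1 ->
       RevS_q P Rw C s2 mu lam q < RevC_q Rw C s2 mu lam q).
Proof.
have hs2p : 0 < s2.
  apply: lt_le_trans hs2; apply: exprn_gt0; apply: divr_gt0 => //; lra.
have hs2n : 0 <= s2 := ltW hs2p.
have P1 : P `[lmin, lmax]%classic = 1%E by case: hsupp.
have hab : lmin <= lmax by lra.
pose Hi := 1 / mu + s2 / 2 * lmax + s2 / 2 * (lmax * lmax / (mu - lmax)).
have WDq : forall q x, 0 <= q -> q <= 1 -> `[lmin, lmax]%classic x ->
  [/\ 1 / mu + s2 / 2 * (q * x) <= W s2 mu (q * x),
      W s2 mu (q * x) <= 1 / mu + s2 / 2 * (q * x) + s2 / 2 * (q * q * (lmax * lmax) / (mu - lmax)),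
      W s2 mu (q * x) <= Hi &
      1 / mu <= W s2 mu (q * x)].
  move=> q x hq0 hq1 /inD/andP[hx1 hx2]; exact: (@WD R s2 mu lmin lmax q x).
have bW : forall q, 0 <= q -> q <= 1 -> forall x, `[lmin, lmax]%classic x ->
    1 / mu <= W s2 mu (q * x) <= Hi.
  by move=> q hq0 hq1 x hx; case: (WDq q x hq0 hq1 hx) => _ _ -> ->.
have bg : forall q, 0 <= q -> q <= 1 -> forall x, `[lmin, lmax]%classic x ->
    Rw - C * Hi <= Rw - C * W s2 mu (q * x) <= Rw - C * (1 / mu).
  move=> q hq0 hq1 x hx; have /andP[h1 h2] := bW q hq0 hq1 x hx.
  have := ler_wpM2l (ltW hC) h1; have := ler_wpM2l (ltW hC) h2.
  move=> *; apply/andP; split; lra.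
split.
  move=> p hp0 hp.
  have hpC : C / mu < Rw - p by lra.
  have [hxi0 [hximu hWxi]] := @xi_facts R Rw C s2 mu p hmu hs2p hC hpC.
  have key : forall q, 0 <= q -> q <= 1 -> C * EW P s2 mu q <= Rw - p ->
      lam <= ELam P -> q * lam <= xi Rw C s2 mu p.
    move=> q hq0 hq1 hE hm.
    have ha0 : 0 <= q * lam by apply: mulr_ge0 => //; lra.
    have ha0l : q * lam <= lam by apply: ler_piMl => //; lra.
    have ha0mu : q * lam < mu by lra.
    pose k := s2 * mu ^+ 2 / (2 * (mu - q * lam) ^+ 2).
    have hk : 0 <= k.
      apply: divr_ge0; first by apply: mulr_ge0 => //; exact: sqr_ge0.
      by apply: mulr_ge0; [lra | exact: sqr_ge0].
    have hL := @lin_lower R P lmin lmax (W s2 mu (q * lam) - k * (q * lam)) (k * q)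
      (1 / mu) Hi (fun x => W s2 mu (q * x)) hab P1 (@mW R s2 mu q) (bW q hq0 hq1).
    have hL' : W s2 mu (q * lam) - k * (q * lam) + k * q * ELam P <= EW P s2 mu q.
      apply: hL => x hx.
      have /andP[hx1 hx2] := @inD R _ _ _ hx.
      have hqx : q * x <= lmax by nra.
      have hT : W s2 mu (q * lam) + k * (q * x - q * lam) <= W s2 mu (q * x).
        by apply: W_tan => //; lra.
      lra.
    have hkm : k * (q * lam) <= k * (q * ELam P).
      by apply: ler_wpM2l => //; apply: ler_wpM2l.
    have hW : W s2 mu (q * lam) <= W s2 mu (xi Rw C s2 mu p).
      have h1 : C * W s2 mu (q * lam) <= C * W s2 mu (xi Rw C s2 mu p).
        have := ler_wpM2l (ltW hC) (_ : W s2 mu (q * lam) <= EW P s2 mu q).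
        by move=> /(_ ltac:(lra)) h; lra.
      by rewrite -(ler_pM2l hC).
    rewrite leNgt; apply/negP => hlt.
    have := @W_lt R s2 mu (q * lam) (xi Rw C s2 mu p) hmu hs2p hlt ha0mu; lra.
  have hqS := qS_cases _ P Rw C s2 mu p; rewrite /= in hqS.
  have [hS0 hS1] := andP (qS_range _ P Rw C s2 mu p).
  split; [move=> hm | split; [move=> _ _ hlx | move=> hlb hlbx]].
  - rewrite /RevS /RevC /qC; apply: fin => //.
    case: hqS => [[-> hE]|[[/andP[h0 h1] hE]|->]].
    + exact: key.
    + by apply: key => //; rewrite ?hE // ltW.
    + by rewrite mul0r; exact: ltW.
  - rewrite /RevS /RevC /qC; apply: fin => //.
    have := ler_piMl (ltW hlam) hS1; lra.
  - have EW1 : 1 / mu <= EW P s2 mu 1.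
      have := @lin_lower R P lmin lmax (1 / mu) 0 (1 / mu) Hi
        (fun x => W s2 mu (1 * x)) hab P1 (@mW R s2 mu 1) (bW 1 ler01 (lexx _)).
      rewrite mul0r addr0; apply => x hx.
      by rewrite mul0r addr0; have /andP[] := bW 1 ler01 (lexx _) x hx.
    have hd : 0 <= EW P s2 mu 1 - 1 / mu by lra.
    have [l0 [lmu lW]] := @W_inv R s2 mu _ hmu hs2p hd.
    have Hlb : 0 <= lambda_bar P s2 mu < mu /\ W s2 mu (lambda_bar P s2 mu) = EW P s2 mu 1.
      rewrite /lambda_bar.
      have := @xgetPex R 0 [set x : R | 0 <= x < mu /\ W s2 mu x = EW P s2 mu 1].
      apply; exists (2 * (EW P s2 mu 1 - 1 / mu) * mu / (s2 * mu + 2 * (EW P s2 mu 1 - 1 / mu))); split; last by rewrite lW; ring.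
      by rewrite l0 lmu.
    case: Hlb => /andP[lb0 lbmu] lbW.
    have hW : W s2 mu (lambda_bar P s2 mu) <= W s2 mu (xi Rw C s2 mu p).
      move: hlbx; rewrite le_eqVlt => /orP[/eqP -> // | hlt].
      by apply: ltW; apply: W_lt.
    have hq1 : C * EW P s2 mu 1 <= Rw - p.
      by rewrite -lbW -hWxi; apply: ler_wpM2l => //; exact: ltW.
    rewrite /RevS /qS hq1 /RevC /qC; apply: ler_wpM2l.
      by apply: mulr_ge0 => //; lra.
    by rewrite ge_min lexx orbT.
split.
  move=> hm.
  pose K := lmax * lmax / (mu - lmax).
  have hK : 0 < K by apply: divr_gt0; [apply: mulr_gt0; lra | lra].
  exists ((lam - ELam P) / K); first by apply: divr_gt0 => //; lra.
  move=> q hq0 hq hq1.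
  have hqK : q * K < lam - ELam P by rewrite -ltr_pdivlMr.
  have hT : q * (q * K) < q * (lam - ELam P) by rewrite ltr_pM2l.
  have hL := @lin_lower R P lmin lmax
    (Rw - C / mu - C * s2 / 2 * (q * q * (lmax * lmax) / (mu - lmax))) (- (C * s2 / 2 * q))
    (Rw - C * Hi) (Rw - C * (1 / mu)) (fun x => Rw - C * W s2 mu (q * x)) hab P1
    (@mRW R Rw C s2 mu q) (bg q (ltW hq0) hq1).
  have hL' : Rw - C / mu - C * s2 / 2 * (q * q * (lmax * lmax) / (mu - lmax)) +
      - (C * s2 / 2 * q) * ELam P <= Rintegral P setT (fun x => Rw - C * W s2 mu (q * x)).
    apply: hL => x hx.
    case: (WDq q x (ltW hq0) hq1 hx) => _ hub _ _.
    have := ler_wpM2l (ltW hC) hub; lra.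
  have hql : q * lam < mu by have := ler_piMl (ltW hlam) hq1; lra.
  have hlb := @W_lb R s2 mu (q * lam) hmu hs2n (ltW (mulr_gt0 hq0 hlam)) hql.
  have hc := ler_wpM2l (ltW hC) hlb.
  have E : C * s2 / 2 * (q * q * (lmax * lmax) / (mu - lmax)) = C * s2 / 2 * (q * (q * K)).
    by rewrite /K; ring.
  have E2 : C * s2 / 2 * (q * (lam - ELam P)) = C * s2 / 2 * (q * lam) - C * s2 / 2 * q * ELam P.
    by ring.
  have hpos := ltr_pM2l (_ : 0 < C * s2 / 2) (q * (q * K)) (q * (lam - ELam P)).
  rewrite hT in hpos.
  rewrite /RevC_q /RevS_q ltr_pM2l; last exact: mulr_gt0.
  apply: lt_le_trans hL'.
  have : 0 < C * s2 / 2 by apply: divr_gt0; [exact: mulr_gt0 | lra].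
  move=> h2; have := hpos h2.
  lra.
move=> hm.
pose K := lam * lam / (mu - lam).
have hK : 0 < K by apply: divr_gt0; [apply: mulr_gt0; lra | lra].
exists ((ELam P - lam) / K); first by apply: divr_gt0 => //; lra.
move=> q hq0 hq hq1.
have hqK : q * K < ELam P - lam by rewrite -ltr_pdivlMr.
have hT : q * (q * K) < q * (ELam P - lam) by rewrite ltr_pM2l.
have hL := @lin_upper R P lmin lmax (Rw - C / mu) (- (C * s2 / 2 * q))
  (Rw - C * Hi) (Rw - C * (1 / mu)) (fun x => Rw - C * W s2 mu (q * x)) hab P1
  (@mRW R Rw C s2 mu q) (bg q (ltW hq0) hq1).
have hL' : Rintegral P setT (fun x => Rw - C * W s2 mu (q * x)) <=
    Rw - C / mu + - (C * s2 / 2 * q) * ELam P.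
  apply: hL => x hx.
  case: (WDq q x (ltW hq0) hq1 hx) => hlb _ _ _.
  have := ler_wpM2l (ltW hC) hlb; lra.
have hql : q * lam <= lam by apply: ler_piMl => //; lra.
have hsq : q * lam * (q * lam) <= q * q * (lam * lam) by rewrite mulrACA.
have hub := @W_ub R s2 mu (q * lam) lam (q * q * (lam * lam)) hmu hs2n
  (ltW (mulr_gt0 hq0 hlam)) hql (lt_trans hlam_lmax hlmax) hsq.
have hc := ler_wpM2l (ltW hC) hub.
have E : C * s2 / 2 * (q * q * (lam * lam) / (mu - lam)) = C * s2 / 2 * (q * (q * K)).
  by rewrite /K; ring.
have hpos := ltr_pM2l (_ : 0 < C * s2 / 2) (q * (q * K)) (q * (ELam P - lam)).
rewrite hT in hpos.
rewrite /RevC_q /RevS_q ltr_pM2l; last exact: mulr_gt0.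
apply: le_lt_trans hL' _.
have : 0 < C * s2 / 2 by apply: divr_gt0; [exact: mulr_gt0 | lra].
move=> h2; have := hpos h2.
lra.
Qed.
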